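(* Let $H^2(\beta)$ be a weighted Hardy space on $\mathbb{D}$ with weights $\beta=(\beta_n)_{n\ge0}$, and let $\varphi$ be a holomorphic self-map of $\mathbb{D}$ such that $C_\varphi:H^2(\beta)\to H^2(\beta)$ is bounded. Then $C_\varphi^*$ is a composition operator (i.e. $C_\varphi^*=C_\psi$ for some map $\psi:\mathbb{D}\to\mathbb{D}$) if and only if $\varphi(z)=\delta z$ for some $\delta\in\mathbb{C}$ with $|\delta|\le1$.
   Context: $\mathbb{D}$ is the open unit disc. Let $(\beta_n)_{n\ge0}$ be a sequence with $\beta_0=1$, $\beta_n>0$ for all $n$, and $\liminf_n\beta_n^{1/n}\ge1$. The weighted Hardy space $H^2(\beta)$ consists of holomorphic $f(z)=\sum_{n\ge0}a_nz^n$ on $\mathbb{D}$ with $\|f\|^2=\sum_{n\ge0}|a_n|^2\beta_n^2<\infty$, with inner product $\langle f,g\rangle=\sum_n a_n\overline{b_n}\beta_n^2$ for $g=\sum b_nz^n$. It is a reproducing kernel Hilbert space with kernel $\kappa_w(z)=\sum_{n\ge0}\frac{\overline{w}^nz^n}{\beta_n^2}$. $C_\varphi f=f\circ\varphi$ and $C_\varphi^*$ is its Hilbert space adjoint. *)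

(* Defs.v *)
From Stdlib Require Import Reals.
From Coquelicot Require Import Coquelicot.
Open Scope R_scope.

Definition weight (beta : nat -> R) : Prop :=
  beta 0%nat = 1 /\ (forall n, 0 < beta n) /\
  Rbar_le 1 (LimInf_seq (fun n => Rpower (beta n) (/ INR n))).

Definition inD (z : C) : Prop := Cmod z < 1.

Definition holo_on_D (f : C -> C) : Prop :=
  forall z : C, inD z -> ex_derive (K:=C_AbsRing) (V:=C_NormedModule) f z.

Definition ps_rep (a : nat -> C) (f : C -> C) : Prop :=
  forall z : C, inD z ->
    is_series (K:=C_AbsRing) (V:=C_NormedModule) (fun n => (a n * pow_n z n)%C) (f z).

Definition H2 (beta : nat -> R) (a : nat -> C) : Prop :=
  ex_series (fun n => (Cmod (a n))^2 * (beta n)^2).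

Definition H2norm (beta : nat -> R) (a : nat -> C) : R :=
  sqrt (Series (fun n => (Cmod (a n))^2 * (beta n)^2)).

Definition H2ip (beta : nat -> R) (a b : nat -> C) : C :=
  (Series (fun n => Re (a n * Cconj (b n)) * (beta n)^2),
   Series (fun n => Im (a n * Cconj (b n)) * (beta n)^2)).

Definition Cphi_bounded (beta : nat -> R) (phi : C -> C) : Prop :=
  exists M : R, forall (a : nat -> C) (f : C -> C), H2 beta a -> ps_rep a f ->
    exists b : nat -> C, H2 beta b /\ ps_rep b (fun z => f (phi z)) /\
      H2norm beta b <= M * H2norm beta a.

(* C_phi^* = C_psi: C_psi maps H^2(beta) into itself and
   <C_phi f, g> = <f, C_psi g> for all f, g in H^2(beta). *)
Definition adjoint_is_composition (beta : nat -> R) (phi psi : C -> C) : Prop :=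
  forall (b : nat -> C) (g : C -> C), H2 beta b -> ps_rep b g ->
    exists c : nat -> C, H2 beta c /\ ps_rep c (fun z => g (psi z)) /\
      forall (a d : nat -> C) (f : C -> C),
        H2 beta a -> ps_rep a f -> H2 beta d -> ps_rep d (fun z => f (phi z)) ->
        H2ip beta d b = H2ip beta a c.

(* Main.v *)
Require Import Defs.
From Stdlib Require Import Reals Lra Lia.
From Coquelicot Require Import Coquelicot.
From Stdlib Require Import ClassicalEpsilon.
Open Scope R_scope.

Lemma norm_sum_le (u : nat -> C) (v : nat -> R) N :
  (forall n, Cmod (u n) <= v n) ->
  Cmod (sum_n (G:=C_AbelianMonoid) u N) <= sum_n v N.
Proof.
  intros H. induction N.
  - rewrite !sum_O. apply H.
  - rewrite !sum_Sn. eapply Rle_trans. apply Cmod_triangle.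
    apply Rplus_le_compat; auto.
Qed.

Lemma series_norm_le (u : nat -> C) (v : nat -> R) l L :
  is_series (K:=C_AbsRing) (V:=C_NormedModule) u l -> is_series v L ->
  (forall n, Cmod (u n) <= v n) -> Cmod l <= L.
Proof.
  intros Hu Hv H.
  assert (H1 : is_lim_seq (fun n => Cmod (sum_n (G:=C_AbelianMonoid) u n)) (Cmod l)).
  { unfold is_lim_seq.
    change (filterlim (fun n => @norm C_AbsRing C_NormedModule (sum_n u n)) eventually (locally (@norm C_AbsRing C_NormedModule l))).
    eapply filterlim_comp. apply Hu.
    apply (filterlim_norm (K:=C_AbsRing) (V:=C_NormedModule)). }
  assert (H2 : is_lim_seq (sum_n v) L) by exact Hv.
  pose proof (is_lim_seq_le _ _ _ _ (fun n => norm_sum_le u v n H) H1 H2). simpl in H0. exact H0.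
Qed.

Lemma sum_bump {G : AbelianMonoid} (k : nat) (v : G) N :
  sum_n (fun n => if Nat.eqb n k then v else zero) N = if Nat.leb k N then v else zero.
Proof.
  induction N.
  - rewrite sum_O. destruct k; reflexivity.
  - rewrite sum_Sn, IHN.
    destruct (Nat.eqb (S N) k) eqn:E.
    + apply Nat.eqb_eq in E. subst. rewrite Nat.leb_refl.
      assert (Nat.leb (S N) N = false) as ->. { apply Nat.leb_gt. auto. }
      apply plus_zero_l.
    + rewrite plus_zero_r. apply Nat.eqb_neq in E.
      destruct (Nat.leb k N) eqn:E1; destruct (Nat.leb k (S N)) eqn:E2; auto.
      * apply Nat.leb_le in E1. apply Nat.leb_gt in E2. lia.
      * apply Nat.leb_gt in E1. apply Nat.leb_le in E2. lia.
Qed.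

Lemma is_series_bump {K : AbsRing} {V : NormedModule K} (k : nat) (v : V) :
  is_series (fun n => if Nat.eqb n k then v else zero) v.
Proof.
  unfold is_series.
  apply filterlim_ext_loc with (f := fun _ => v).
  - exists k. intros n Hn. symmetry. rewrite sum_bump.
    assert (Nat.leb k n = true) as -> by (apply Nat.leb_le; lia). reflexivity.
  - apply filterlim_const.
Qed.

Lemma is_series_C_unique (u : nat -> C) l1 l2 :
  is_series (K:=C_AbsRing) (V:=C_NormedModule) u l1 ->
  is_series (K:=C_AbsRing) (V:=C_NormedModule) u l2 -> l1 = l2.
Proof.
  intros H1 H2.
  exact (filterlim_locally_unique (K:=C_AbsRing) (V:=C_NormedModule) (F:=eventually)
     (sum_n u) l1 l2 H1 H2).
Qed.

Lemma is_series_R_bump_val k (x : R) : Series (fun n => if Nat.eqb n k then x else 0) = x.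
Proof. apply is_series_unique. apply (is_series_bump (V:=R_NormedModule)). Qed.

Lemma Cpow_0 n : (n > 0)%nat -> pow_n (K:=C_Ring) (RtoC 0) n = RtoC 0.
Proof. destruct n. lia. intros _. simpl. change (RtoC 0 * pow_n (K:=C_Ring) (RtoC 0) n = RtoC 0)%C. ring. Qed.

Lemma ps_rep_0 a f : ps_rep a f -> f (RtoC 0) = a 0%nat.
Proof.
  intros H. assert (inD (RtoC 0)) by (unfold inD; rewrite Cmod_0; lra).
  specialize (H _ H0).
  eapply is_series_C_unique. apply H.
  eapply is_series_ext. 2: apply (is_series_bump (K:=C_AbsRing) (V:=C_NormedModule) 0 (a 0%nat)).
  intros n. destruct n; simpl.
  - change (a 0%nat = a 0%nat * RtoC 1)%C. ring.
  - change (RtoC 0 = a (S n) * (RtoC 0 * pow_n (K:=C_Ring) (RtoC 0) n))%C. ring.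
Qed.

Lemma series_terms_bounded (u : nat -> C) l :
  is_series (K:=C_AbsRing) (V:=C_NormedModule) u l -> exists M, forall n, Cmod (u n) <= M.
Proof.
  intros H. destruct (filterlim_bounded (K:=C_AbsRing) (V:=C_NormedModule) (sum_n u)) as [M HM].
  { exists l. exact H. }
  exists (2*M). intros n. destruct n.
  - specialize (HM 0%nat). rewrite sum_O in HM. change (Cmod (u 0%nat) <= M) in HM.
    assert (0 <= M) by (eapply Rle_trans; [apply Cmod_ge_0|apply HM]). lra.
  - assert (u (S n) = Cminus (sum_n u (S n)) (sum_n u n)).
    { rewrite sum_Sn. change (u (S n) = (sum_n u n + u (S n)) - sum_n u n)%C. ring. }
    rewrite H0. unfold Cminus. eapply Rle_trans. apply Cmod_triangle. rewrite Cmod_opp.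
    pose proof (HM (S n)); pose proof (HM n). change (Cmod (sum_n u (S n)) <= M) in H1.
    change (Cmod (sum_n u n) <= M) in H2. lra.
Qed.

Lemma Cmod_pow_n (z : C) n : Cmod (pow_n (K:=C_Ring) z n) = Cmod z ^ n.
Proof. induction n; simpl. apply Cmod_1. change (Cmod (z * pow_n (K:=C_Ring) z n)%C = Cmod z * Cmod z ^ n).
  rewrite Cmod_mult, IHn. reflexivity. Qed.

Lemma lemB a h : ps_rep a h ->
  exists K, 0 <= K /\ forall z, Cmod z <= /4 -> Cmod (h z - a 0%nat)%C <= K * Cmod z.
Proof.
  intros H.
  assert (Hr : inD (RtoC (/2))) by (unfold inD; rewrite Cmod_R, Rabs_right; lra).
  destruct (series_terms_bounded _ _ (H _ Hr)) as [M HM].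
  assert (HM0 : 0 <= M) by (eapply Rle_trans; [apply Cmod_ge_0|apply (HM 0%nat)]).
  exists (4*M). split. lra.
  intros z Hz.
  assert (HzD : inD z) by (unfold inD; lra).
  set (q := 2 * Cmod z).
  assert (Hq : 0 <= q <= /2) by (pose proof (Cmod_ge_0 z); unfold q; lra).
  assert (Hs1 := H _ HzD).
  pose proof (is_series_minus _ _ _ _ Hs1 (is_series_bump (K:=C_AbsRing) (V:=C_NormedModule) 0 (a 0%nat))) as Hs2.
  assert (Hv : is_series (fun n => if Nat.eqb n 0 then 0 else M * q ^ n) (M * / (1 - q) - M)).
  { eapply is_series_ext.
    2: apply (is_series_minus _ _ _ _ (is_series_scal (K:=R_AbsRing) M _ _ (is_series_geom q ltac:(rewrite Rabs_right; lra))) (is_series_bump (K:=R_AbsRing) (V:=R_NormedModule) 0 M)).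
    intros n. destruct n as [|n]; simpl.
    - change (M * 1 + - M = 0). ring.
    - change (M * (q * q ^ n) + - 0 = M * (q * q ^ n)). ring. }
  eapply Rle_trans. apply (series_norm_le _ _ _ _ Hs2 Hv).
  - intros n. destruct n; simpl.
    + change (Cmod (a 0%nat * RtoC 1 - a 0%nat)%C <= 0).
      replace (a 0%nat * RtoC 1 - a 0%nat)%C with (RtoC 0) by ring. rewrite Cmod_0. lra.
    + change (Cmod (a (S n) * (z * pow_n (K:=C_Ring) z n) - RtoC 0)%C <= M * (q * q ^ n)).
      replace (a (S n) * (z * pow_n (K:=C_Ring) z n) - RtoC 0)%C with (a (S n) * pow_n (K:=C_Ring) z (S n))%C by
        (change (a (S n) * (z * pow_n (K:=C_Ring) z n) = a (S n) * (z * pow_n (K:=C_Ring) z n) - RtoC 0)%C; ring).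
      rewrite Cmod_mult, Cmod_pow_n.
      specialize (HM (S n)). change (Cmod (a (S n) * pow_n (K:=C_Ring) (RtoC (/2)) (S n))%C <= M) in HM.
      rewrite Cmod_mult, Cmod_pow_n, Cmod_R, Rabs_right in HM by lra.
      replace (Cmod z) with (/2 * q) by (unfold q; field).
      rewrite Rpow_mult_distr. change (q * q ^ n) with (q ^ S n).
      pose proof (pow_le q (S n) ltac:(lra)).
      replace (Cmod (a (S n)) * ((/2) ^ S n * q ^ S n)) with ((Cmod (a (S n)) * (/2) ^ S n) * q ^ S n) by ring.
      apply Rmult_le_compat_r; lra.
  - assert (M * / (1 - q) - M = M * q / (1 - q)) by (field; lra).
    rewrite H0. unfold q. apply Rle_trans with (M * (2 * Cmod z) * 2).
    + unfold Rdiv. apply Rmult_le_compat_l. pose proof (Cmod_ge_0 z). nra.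
      rewrite <- Rinv_inv. apply Rinv_le_contravar; lra.
    + lra.
Qed.

Lemma lemS a h : ps_rep a h ->
  exists h', ps_rep (fun n => a (S n)) h' /\
    forall z, inD z -> z <> RtoC 0 -> h z = (a 0%nat + z * h' z)%C.
Proof.
  intros H.
  exists (fun z => match excluded_middle_informative (z = RtoC 0) with
           | left _ => a 1%nat | right _ => ((h z - a 0%nat) / z)%C end).
  split.
  - intros z Hz. destruct (excluded_middle_informative (z = RtoC 0)) as [E|E].
    + subst z. eapply is_series_ext.
      2: apply (is_series_bump (K:=C_AbsRing) (V:=C_NormedModule) 0 (a 1%nat)).
      intros n. destruct n; simpl.
      * change (a 1%nat = a 1%nat * RtoC 1)%C. ring.
      * change (RtoC 0 = a (S (S n)) * (RtoC 0 * pow_n (K:=C_Ring) (RtoC 0) n))%C. ring.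
    + specialize (H z Hz).
      assert (H1 : is_series (K:=C_AbsRing) (V:=C_NormedModule) (fun n => (a (S n) * pow_n (K:=C_Ring) z (S n))%C) (h z - a 0%nat)%C).
      { apply (is_series_incr_1 (K:=C_AbsRing) (V:=C_NormedModule) (fun n => (a n * pow_n (K:=C_Ring) z n)%C)).
        match goal with |- is_series _ ?l => replace l with (h z) by
          (simpl; change (h z = (h z - a 0%nat) + a 0%nat * RtoC 1)%C; ring) end.
        exact H. }
      pose proof (is_series_scal (K:=C_AbsRing) (V:=C_NormedModule) (/ z)%C _ _ H1) as H2.
      replace ((h z - a 0%nat) / z)%C with (scal (K:=C_AbsRing) (V:=C_NormedModule) (/ z)%C (h z - a 0%nat)%C)
        by (change ((/z) * (h z - a 0%nat) = (h z - a 0%nat) / z)%C; field; exact E).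
      eapply is_series_ext. 2: exact H2. intros n. simpl.
      change ((/z) * (a (S n) * (z * pow_n (K:=C_Ring) z n)) = a (S n) * pow_n (K:=C_Ring) z n)%C.
      field. exact E.
  - intros z Hz Hz0. destruct (excluded_middle_informative (z = RtoC 0)). contradiction.
    field. exact Hz0.
Qed.

Lemma small_zero x D : 0 <= x -> (forall t, 0 < t <= /4 -> x <= D * t) -> x = 0.
Proof.
  intros Hx H. destruct (Rle_lt_or_eq_dec 0 x Hx) as [Hp|]; [|auto].
  exfalso. set (t := Rmin (/4) (x / (2 * (Rabs D + 1)))).
  assert (Ht : 0 < t <= /4).
  { unfold t. split. apply Rmin_glb_lt. lra. apply Rdiv_lt_0_compat. lra. pose proof (Rabs_pos D); lra.
    apply Rmin_l. }
  specialize (H t Ht).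
  assert (D * t <= Rabs D * t) by (apply Rmult_le_compat_r; [lra| apply Rle_abs]).
  assert (t <= x / (2 * (Rabs D + 1))) by apply Rmin_r.
  assert (Rabs D * t <= Rabs D * (x / (2 * (Rabs D + 1)))) by (apply Rmult_le_compat_l; [apply Rabs_pos|lra]).
  assert (Rabs D * (x / (2 * (Rabs D + 1))) < x).
  { pose proof (Rabs_pos D). apply Rmult_lt_reg_r with (2 * (Rabs D + 1)). lra.
    field_simplify; nra. }
  lra.
Qed.

Lemma inD_real t : 0 <= t < 1 -> inD (RtoC t).
Proof. intros. unfold inD. rewrite Cmod_R, Rabs_right; lra. Qed.

Lemma lem_c1 a h : ps_rep a h ->
  (exists K, forall z, inD z -> Cmod z <= /4 -> Cmod (h z - h (RtoC 0))%C <= K * Cmod z ^ 2) ->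
  a 1%nat = RtoC 0.
Proof.
  intros H [K HK].
  destruct (lemS a h H) as [h' [Hh' Hrel]].
  destruct (lemB _ _ Hh') as [Cb [HC0 HC]].
  apply Cmod_eq_0. apply small_zero with (Cb + K). apply Cmod_ge_0.
  intros t Ht.
  assert (Hz : inD (RtoC t)) by (apply inD_real; lra).
  assert (Hz0 : RtoC t <> RtoC 0) by (intro E; injection E; lra).
  assert (Hmt : Cmod (RtoC t) = t) by (rewrite Cmod_R, Rabs_right; lra).
  specialize (HC (RtoC t) ltac:(lra)). simpl in HC.
  specialize (HK (RtoC t) Hz ltac:(lra)).
  rewrite (Hrel _ Hz Hz0), (ps_rep_0 _ _ H) in HK.
  replace (a 0%nat + RtoC t * h' (RtoC t) - a 0%nat)%C with (RtoC t * h' (RtoC t))%C in HK by ring.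
  rewrite Cmod_mult, Hmt in HK. rewrite Hmt in HC.
  assert (Hh : Cmod (h' (RtoC t)) <= K * t).
  { apply Rmult_le_reg_l with t. lra. nra. }
  replace (a 1%nat) with ((a 1%nat - h' (RtoC t)) + h' (RtoC t))%C by ring.
  eapply Rle_trans. apply Cmod_triangle.
  rewrite <- Cmod_opp. replace (- (a 1%nat - h' (RtoC t)))%C with (h' (RtoC t) - a 1%nat)%C by ring.
  lra.
Qed.

Lemma uniq0 : forall k e, ps_rep e (fun _ => RtoC 0) -> e k = RtoC 0.
Proof.
  induction k; intros e H.
  - symmetry. apply (ps_rep_0 _ _ H).
  - destruct (lemS e _ H) as [h' [Hh' Hrel]].
    assert (E1 : e 1%nat = RtoC 0).
    { apply (lem_c1 e _ H). exists 0. intros. replace (RtoC 0 - RtoC 0)%C with (RtoC 0) by ring.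
      rewrite Cmod_0. lra. }
    apply (IHk (fun n => e (S n))).
    intros z Hz. pose proof (Hh' z Hz) as Hs.
    replace (RtoC 0) with (h' z). exact Hs.
    destruct (excluded_middle_informative (z = RtoC 0)) as [Z|Z].
    + subst z. rewrite (ps_rep_0 _ _ Hh'). exact E1.
    + specialize (Hrel z Hz Z). assert (E0 : e 0%nat = RtoC 0) by (symmetry; exact (ps_rep_0 _ _ H)).
      rewrite E0 in Hrel.
      assert (RtoC 0 = z * h' z)%C. { rewrite Hrel at 1. ring. }
      apply Cmod_eq_0. pose proof (f_equal Cmod H0). rewrite Cmod_0, Cmod_mult in H1.
      assert (0 < Cmod z) by (apply Cmod_gt_0; auto). nra.
Qed.

Lemma uniq a b h : ps_rep a h -> ps_rep b h -> forall n, a n = b n.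
Proof.
  intros Ha Hb n.
  assert (ps_rep (fun n => a n - b n)%C (fun _ => RtoC 0)).
  { intros z Hz. pose proof (is_series_minus _ _ _ _ (Ha z Hz) (Hb z Hz)).
    replace (RtoC 0) with (plus (h z) (opp (h z))).
    eapply is_series_ext. 2: exact H. intros. simpl. change ((a n0 * pow_n (K:=C_Ring) z n0) - (b n0 * pow_n (K:=C_Ring) z n0) = (a n0 - b n0) * pow_n (K:=C_Ring) z n0)%C. ring.
    change (h z - h z = RtoC 0)%C. ring. }
  pose proof (uniq0 n _ H). replace (a n) with ((a n - b n) + b n)%C by ring. rewrite H0. ring.
Qed.

Definition ek (k : nat) : nat -> C := fun n => if Nat.eqb n k then RtoC 1 else RtoC 0.

Lemma ps_rep_ext a f g : ps_rep a f -> (forall z, f z = g z) -> ps_rep a g.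
Proof. intros H E z Hz. rewrite <- E. apply H, Hz. Qed.

Lemma ps_ek k : ps_rep (ek k) (fun z => pow_n (K:=C_Ring) z k).
Proof.
  intros z Hz. eapply is_series_ext.
  2: apply (is_series_bump (K:=C_AbsRing) (V:=C_NormedModule) k (pow_n (K:=C_Ring) z k)).
  intros n. unfold ek. destruct (Nat.eqb n k) eqn:E.
  - apply Nat.eqb_eq in E. subst k. change (@eq C (pow_n (K:=C_Ring) z n) (RtoC 1 * pow_n (K:=C_Ring) z n)%C). rewrite Cmult_1_l. reflexivity.
  - change (RtoC 0 = RtoC 0 * pow_n (K:=C_Ring) z n)%C. ring.
Qed.

Lemma H2_ek beta k : H2 beta (ek k).
Proof.
  unfold H2. exists (beta k ^ 2). eapply is_series_ext.
  2: apply (is_series_bump (K:=R_AbsRing) (V:=R_NormedModule) k (beta k ^ 2)).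
  intros n. unfold ek. destruct (Nat.eqb n k) eqn:E.
  - apply Nat.eqb_eq in E. subst k. rewrite Cmod_1. simpl; ring.
  - rewrite Cmod_0. change (0 = 0 ^ 2 * beta n ^ 2). ring.
Qed.

Lemma ip_e_r beta x k : H2ip beta x (ek k) = (Re (x k) * beta k ^ 2, Im (x k) * beta k ^ 2).
Proof.
  unfold H2ip. f_equal.
  - rewrite <- (is_series_R_bump_val k (Re (x k) * beta k ^ 2)). apply Series_ext.
    intros n. unfold ek. destruct (Nat.eqb n k) eqn:E.
    + apply Nat.eqb_eq in E. subst k. destruct (x n) as [u v]. simpl. ring.
    + destruct (x n) as [u v]. simpl. ring.
  - rewrite <- (is_series_R_bump_val k (Im (x k) * beta k ^ 2)). apply Series_ext.
    intros n. unfold ek. destruct (Nat.eqb n k) eqn:E.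
    + apply Nat.eqb_eq in E. subst k. destruct (x n) as [u v]. simpl. ring.
    + destruct (x n) as [u v]. simpl. ring.
Qed.

Lemma ip_e_l beta y k : H2ip beta (ek k) y = (Re (y k) * beta k ^ 2, - Im (y k) * beta k ^ 2).
Proof.
  unfold H2ip. f_equal.
  - rewrite <- (is_series_R_bump_val k (Re (y k) * beta k ^ 2)). apply Series_ext.
    intros n. unfold ek. destruct (Nat.eqb n k) eqn:E.
    + apply Nat.eqb_eq in E. subst k. destruct (y n) as [u v]. simpl. ring.
    + destruct (y n) as [u v]. simpl. ring.
  - rewrite <- (is_series_R_bump_val k (- Im (y k) * beta k ^ 2)). apply Series_ext.
    intros n. unfold ek. destruct (Nat.eqb n k) eqn:E.
    + apply Nat.eqb_eq in E. subst k. destruct (y n) as [u v]. simpl. ring.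
    + destruct (y n) as [u v]. simpl. ring.
Qed.

Lemma C_eq0 (x : C) : Re x = 0 -> Im x = 0 -> x = RtoC 0.
Proof. destruct x as [u v]. simpl. intros -> ->. reflexivity. Qed.

Lemma pow_n_mult (x y : C) n : pow_n (K:=C_Ring) (x * y)%C n = (pow_n (K:=C_Ring) x n * pow_n (K:=C_Ring) y n)%C.
Proof. induction n; simpl. change (RtoC 1 = RtoC 1 * RtoC 1)%C. ring.
  change ((x*y) * pow_n (K:=C_Ring) (x * y)%C n = (x * pow_n (K:=C_Ring) x n) * (y * pow_n (K:=C_Ring) y n))%C.
  rewrite IHn. ring. Qed.

Lemma pow_le_1 x n : 0 <= x <= 1 -> x ^ n <= 1.
Proof. intros H. induction n; simpl. lra. pose proof (pow_le x n ltac:(lra)). nra. Qed.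

Lemma backward (beta : nat -> R) (phi : C -> C) (delta : C) :
  (forall n, 0 < beta n) -> Cmod delta <= 1 -> (forall z, inD z -> phi z = (delta * z)%C) ->
  exists psi : C -> C, (forall z, inD z -> inD (psi z)) /\ adjoint_is_composition beta phi psi.
Proof.
  intros Hb Hd Hphi.
  exists (fun z => (Cconj delta * z)%C). split.
  { intros z Hz. unfold inD in *. rewrite Cmod_mult, Cmod_conj.
    pose proof (Cmod_ge_0 z). nra. }
  intros b g Hb2 Hg.
  exists (fun n => (b n * pow_n (K:=C_Ring) (Cconj delta) n)%C).
  split; [|split].
  - unfold H2 in *. apply (ex_series_le (K:=R_AbsRing) (V:=R_CompleteNormedModule)) with (2 := Hb2).
    intros n. change (Rabs (Cmod (b n * pow_n (K:=C_Ring) (Cconj delta) n)%C ^ 2 * beta n ^ 2) <= Cmod (b n) ^ 2 * beta n ^ 2).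
    rewrite Cmod_mult, Cmod_pow_n, Cmod_conj.
    pose proof (Cmod_ge_0 delta). pose proof (Cmod_ge_0 (b n)).
    assert (0 <= Cmod delta ^ n <= 1) by (split; [apply pow_le; lra| apply pow_le_1; lra]).
    rewrite Rabs_right.
    + apply Rmult_le_compat_r. apply pow_le; pose proof (Hb n); lra.
      set (u := Cmod delta ^ n) in *. set (w := Cmod (b n)) in *.
      assert (u * u <= 1) by nra.
      replace ((w * u) ^ 2) with ((w * w) * (u * u)) by ring.
      replace (w ^ 2) with ((w * w) * 1) by ring.
      apply Rmult_le_compat_l. nra. exact H2.
    + apply Rle_ge. nra.
  - intros z Hz. assert (Hz' : inD (Cconj delta * z)%C).
    { unfold inD in *. rewrite Cmod_mult, Cmod_conj. pose proof (Cmod_ge_0 z). nra. }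
    eapply is_series_ext. 2: exact (Hg _ Hz'). intros n. simpl.
    rewrite pow_n_mult. change (b n * (pow_n (K:=C_Ring) (Cconj delta) n * pow_n (K:=C_Ring) z n) = b n * pow_n (K:=C_Ring) (Cconj delta) n * pow_n (K:=C_Ring) z n)%C. ring.
  - intros a d f Ha2 Ha Hd2 Hdf.
    assert (Hd' : ps_rep (fun n => a n * pow_n (K:=C_Ring) delta n)%C (fun z => f (phi z))).
    { intros z Hz. rewrite Hphi by exact Hz.
      assert (Hz' : inD (delta * z)%C).
      { unfold inD in *. rewrite Cmod_mult. pose proof (Cmod_ge_0 z). nra. }
      eapply is_series_ext. 2: exact (Ha _ Hz'). intros n. simpl.
      rewrite pow_n_mult. change (a n * (pow_n (K:=C_Ring) delta n * pow_n (K:=C_Ring) z n) = a n * pow_n (K:=C_Ring) delta n * pow_n (K:=C_Ring) z n)%C. ring. }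
    pose proof (uniq _ _ _ Hdf Hd') as E.
    assert (T : forall n, (d n * Cconj (b n))%C = (a n * Cconj (b n * pow_n (K:=C_Ring) (Cconj delta) n))%C).
    { intros n. rewrite E. rewrite Cmult_conj. change (pow_n (K:=C_Ring) (Cconj delta) n) with (Cpow (Cconj delta) n).
      rewrite Cpow_conj, Cconj_conj. change (Cpow delta n) with (pow_n (K:=C_Ring) delta n). ring. }
    unfold H2ip. f_equal; apply Series_ext; intros n; rewrite T; reflexivity.
Qed.

Lemma Cminus0 (w : C) : (w - RtoC 0)%C = w.
Proof. ring. Qed.

Lemma forward (beta : nat -> R) (phi psi : C -> C) :
  (forall n, 0 < beta n) ->
  (forall z, inD z -> inD (phi z)) ->
  Cphi_bounded beta phi ->
  adjoint_is_composition beta phi psi ->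
  exists delta : C, Cmod delta <= 1 /\ forall z, inD z -> phi z = (delta * z)%C.
Proof.
  intros Hb Hphi [M HM] Hadj.
  assert (Hid : ps_rep (ek 1) (fun z => z)).
  { eapply ps_rep_ext. apply ps_ek. intros z. simpl. change (z * RtoC 1 = z)%C. ring. }
  destruct (HM (ek 1) (fun z => z) (H2_ek beta 1) Hid) as [d [Hd2 [Hd _]]].
  destruct (Hadj (ek 1) (fun z => z) (H2_ek beta 1) Hid) as [c1 [_ [Hc1 Hip1]]].
  assert (Hone : ps_rep (ek 0) (fun _ => RtoC 1)).
  { eapply ps_rep_ext. apply ps_ek. intros z. reflexivity. }
  assert (Hpsi0 : psi (RtoC 0) = RtoC 0).
  { rewrite (ps_rep_0 _ _ Hc1).
    specialize (Hip1 (ek 0) (ek 0) (fun _ => RtoC 1) (H2_ek beta 0) Hone (H2_ek beta 0) Hone).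
    rewrite ip_e_r, ip_e_l in Hip1. simpl in Hip1. injection Hip1. intros.
    pose proof (Hb 0%nat).
    assert (beta 0%nat ^ 2 > 0) by (apply pow_lt; lra).
    apply C_eq0; nra. }
  destruct (lemB _ _ Hc1) as [Kp [HKp0 HKp]].
  rewrite <- (ps_rep_0 _ _ Hc1), Hpsi0 in HKp.
  assert (Hdk : forall k, k <> 1%nat -> d k = RtoC 0).
  { intros k Hk.
    destruct (Hadj (ek k) (fun z => pow_n (K:=C_Ring) z k) (H2_ek beta k) (ps_ek k)) as [ck [_ [Hck Hipk]]].
    specialize (Hipk (ek 1) d (fun z => z) (H2_ek beta 1) Hid Hd2 Hd).
    assert (Hc : ck 1%nat = RtoC 0).
    { apply (lem_c1 ck _ Hck).
      destruct k as [|k].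
      - exists 0. intros. simpl. change (Cmod (RtoC 1 - RtoC 1)%C <= 0 * (Cmod z * (Cmod z * 1))).
        replace (RtoC 1 - RtoC 1)%C with (RtoC 0) by ring. rewrite Cmod_0. lra.
      - destruct k as [|k]. lia.
        exists (Kp ^ (S (S k))). intros z Hz Hz4.
        rewrite Hpsi0. rewrite (Cpow_0 (S (S k))) by lia.
        rewrite Cminus0.
        rewrite Cmod_pow_n.
        specialize (HKp z Hz4). replace (psi z - RtoC 0)%C with (psi z) in HKp by ring.
        pose proof (Cmod_ge_0 z). pose proof (Cmod_ge_0 (psi z)).
        apply Rle_trans with ((Kp * Cmod z) ^ S (S k)).
        + apply pow_incr. lra.
        + rewrite Rpow_mult_distr. apply Rmult_le_compat_l. apply pow_le; lra.
          change (Cmod z * (Cmod z * Cmod z ^ k) <= Cmod z ^ 2). simpl.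
          assert (Cmod z ^ k <= 1) by (apply pow_le_1; lra).
          assert (0 <= Cmod z * Cmod z) by nra. nra. }
    rewrite ip_e_r, ip_e_l, Hc in Hipk. simpl in Hipk. injection Hipk. intros.
    pose proof (Hb k). assert (beta k ^ 2 > 0) by (apply pow_lt; lra).
    apply C_eq0; nra. }
  exists (d 1%nat). split.
  - destruct (Rle_or_lt (Cmod (d 1%nat)) 1) as [|Hgt]; [assumption|exfalso].
    set (t := / Cmod (d 1%nat)).
    assert (Ht : 0 < t < 1).
    { unfold t. split. apply Rinv_0_lt_compat; lra. rewrite <- Rinv_1. apply Rinv_lt_contravar; lra. }
    assert (Hz : inD (RtoC t)) by (apply inD_real; lra).
    pose proof (Hphi _ Hz) as Hin. unfold inD in Hin.
    assert (Hv : phi (RtoC t) = (d 1%nat * RtoC t)%C).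
    { eapply is_series_C_unique. apply (Hd _ Hz).
      eapply is_series_ext. 2: apply (is_series_bump (K:=C_AbsRing) (V:=C_NormedModule) 1 (d 1%nat * RtoC t)%C).
      intros n. cbv beta. destruct (Nat.eqb n 1) eqn:E.
      - apply Nat.eqb_eq in E. subst. simpl. f_equal. symmetry. apply Cmult_1_r.
      - apply Nat.eqb_neq in E. rewrite (Hdk n E). change (RtoC 0 = RtoC 0 * pow_n (K:=C_Ring) (RtoC t) n)%C. ring. }
    rewrite Hv, Cmod_mult, Cmod_R, Rabs_right in Hin by lra.
    unfold t in Hin. rewrite Rinv_r in Hin by lra. lra.
  - intros z Hz. eapply is_series_C_unique. apply (Hd _ Hz).
    eapply is_series_ext. 2: apply (is_series_bump (K:=C_AbsRing) (V:=C_NormedModule) 1 (d 1%nat * z)%C).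
    intros n. cbv beta. destruct (Nat.eqb n 1) eqn:E.
    + apply Nat.eqb_eq in E. subst. simpl. f_equal. symmetry. apply Cmult_1_r.
    + apply Nat.eqb_neq in E. rewrite (Hdk n E). change (RtoC 0 = RtoC 0 * pow_n (K:=C_Ring) z n)%C. ring.
Qed.

Theorem theorem3p3 (beta : nat -> R) (phi : C -> C) :
  weight beta ->
  holo_on_D phi ->
  (forall z, inD z -> inD (phi z)) ->
  Cphi_bounded beta phi ->
  ((exists psi : C -> C, (forall z, inD z -> inD (psi z)) /\
                         adjoint_is_composition beta phi psi)
   <->
   (exists delta : C, Cmod delta <= 1 /\ forall z, inD z -> phi z = (delta * z)%C)).
Proof.
  intros [_ [Hb _]] _ Hphi Hbd. split.
  - intros [psi [_ Hadj]]. eapply forward; eauto.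
  - intros [delta [Hd Hp]]. eapply backward; eauto.
Qed.
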